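(* Every $E$-linear code $C$ of length $2n$ is two-sided symplectic nice, i.e. $|C|\,|C^{\perp_S}|=|E|^{2n}$.
   Context: $E=\langle \kappa,\tau \mid 2\kappa=2\tau=0,\ \kappa^2=\kappa,\ \tau^2=\tau,\ \kappa\tau=\kappa,\ \tau\kappa=\tau\rangle$ is the non-unital ring $\{0,\kappa,\tau,\zeta\}$ ($|E|=4$), $\zeta=\kappa+\tau$, with $e\kappa=e\tau=e$, $e\zeta=0$ for all $e\in E$. An $E$-linear code of length $2n$ is a left $E$-submodule $C\subseteq E^{2n}$. Symplectic inner product: for $x=(u|v),y=(u'|v')\in E^{2n}$, $\langle x,y\rangle_s=\sum_i u_iv'_i+\sum_i v_iu'_i$. $C^{\perp_S}=\{z\in E^{2n}:\langle z,w\rangle_s=0\text{ and }\langle w,z\rangle_s=0\ \forall w\in C\}$. *)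

(* Defs.v *)
From HB Require Import structures.
From mathcomp Require Import all_boot.
Set Implicit Arguments. Unset Strict Implicit. Unset Printing Implicit Defensive.

(* The non-unital ring E = {0, kappa, tau, zeta}, zeta = kappa + tau, char 2. *)
Inductive E := E0 | Ek | Et | Ez.

Definition E_to (x : E) : 'I_4 :=
  match x with E0 => inord 0 | Ek => inord 1 | Et => inord 2 | Ez => inord 3 end.
Definition E_of (i : 'I_4) : E :=
  match val i with 0 => E0 | 1 => Ek | 2 => Et | _ => Ez end.
Lemma E_toK : cancel E_to E_of.
Proof. by case; rewrite /E_of /= inordK. Qed.
HB.instance Definition _ := Finite.copy E (can_type E_toK).

Definition addE (x y : E) : E :=
  match x, y with
  | E0, y => y
  | x, E0 => x
  | Ek, Ek | Et, Et | Ez, Ez => E0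
  | Ek, Et | Et, Ek => Ez
  | Ek, Ez | Ez, Ek => Et
  | Et, Ez | Ez, Et => Ek
  end.

Definition mulE (x y : E) : E :=
  match y with
  | Ek | Et => x
  | _ => E0
  end.

(* words of length 2n, written x = (u | v) *)
Definition word (n : nat) : finType := ({ffun 'I_n -> E} * {ffun 'I_n -> E})%type.

Definition word0 n : word n := ([ffun=> E0], [ffun=> E0]).
Definition addw n (x y : word n) : word n :=
  ([ffun i => addE (x.1 i) (y.1 i)], [ffun i => addE (x.2 i) (y.2 i)]).
Definition scalew n (e : E) (x : word n) : word n :=
  ([ffun i => mulE e (x.1 i)], [ffun i => mulE e (x.2 i)]).

Definition sumE n (f : 'I_n -> E) : E := \big[addE/E0]_(i < n) f i.

Definition symp n (x y : word n) : E :=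
  addE (sumE (fun i => mulE (x.1 i) (y.2 i))) (sumE (fun i => mulE (x.2 i) (y.1 i))).

Definition E_linear n (C : {set word n}) : Prop :=
  [/\ word0 n \in C,
      forall x y, x \in C -> y \in C -> addw x y \in C
    & forall e x, x \in C -> scalew e x \in C].

Definition symp_dual n (C : {set word n}) : {set word n} :=
  [set z | [forall w in C, (symp z w == E0) && (symp w z == E0)]].

(* Main.v *)
Require Import Defs.
From mathcomp Require Import all_boot.
Set Implicit Arguments. Unset Strict Implicit. Unset Printing Implicit Defensive.

Definition phiE (x : E) := match x with Ek | Et => true | _ => false end.
Definition psiE (x : E) := match x with Ez | Et => true | _ => false end.
Definition bE (a1 a2 c1 c2 : E) : bool :=
  (psiE a1 && phiE c2) (+) (psiE a2 && phiE c1) (+) (psiE c1 && phiE a2) (+) (psiE c2 && phiE a1).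
Definition beta n (z w : word n) : bool :=
  \big[addb/false]_(i < n) bE (z.1 i) (z.2 i) (w.1 i) (w.2 i).

Lemma psi_sum n (f : 'I_n -> E) : psiE (sumE f) = \big[addb/false]_i psiE (f i).
Proof. rewrite /sumE; apply: (big_morph psiE) => // x y; by case: x; case: y. Qed.
Lemma phi_sum n (f : 'I_n -> E) : phiE (sumE f) = \big[addb/false]_i phiE (f i).
Proof. rewrite /sumE; apply: (big_morph phiE) => // x y; by case: x; case: y. Qed.
Lemma psi_add x y : psiE (addE x y) = psiE x (+) psiE y. Proof. by case: x; case: y. Qed.
Lemma phi_add x y : phiE (addE x y) = phiE x (+) phiE y. Proof. by case: x; case: y. Qed.
Lemma E0P (x : E) : (x == E0) = ~~ phiE x && ~~ psiE x. Proof. by case: x; rewrite ?eqxx //; apply/negbTE/eqP. Qed.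

Ltac brute z w i := rewrite ?ffunE; by case: (z.1 i); case: (z.2 i); case: (w.1 i); case: (w.2 i).

Lemma beta_psi n (z w : word n) : beta z w = psiE (symp z w) (+) psiE (symp w z).
Proof.
rewrite /symp !psi_add !psi_sum -!big_split /=; apply: eq_bigr => i _; brute z w i.
Qed.
Lemma psi_zw n (z w : word n) : psiE (symp z w) = beta z (scalew Ek w).
Proof.
rewrite /symp !psi_add !psi_sum -!big_split /=; apply: eq_bigr => i _; brute z w i.
Qed.
Lemma psi_wz n (z w : word n) : psiE (symp w z) = beta z (addw w (scalew Ek w)).
Proof.
rewrite /symp !psi_add !psi_sum -!big_split /=; apply: eq_bigr => i _; brute z w i.
Qed.
Lemma phi_zw n (z w : word n) : phiE (symp z w) = beta z (scalew Ez w).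
Proof.
rewrite /symp !phi_add !phi_sum -!big_split /=; apply: eq_bigr => i _; brute z w i.
Qed.
Lemma phi_wz n (z w : word n) : phiE (symp w z) = beta z (scalew Ez w).
Proof.
rewrite /symp !phi_add !phi_sum -!big_split /=; apply: eq_bigr => i _; brute z w i.
Qed.

Lemma dual_eq n (C : {set word n}) : E_linear C ->
  symp_dual C = [set z | [forall w in C, ~~ beta z w]].
Proof.
case=> C0 Cadd Cscale; apply/setP => z; rewrite !inE.
apply/forall_inP/forall_inP => H w wC.
  by rewrite beta_psi; have /andP[/eqP -> /eqP ->] := H w wC.
rewrite !E0P phi_zw phi_wz psi_zw psi_wz !H //; by [apply: Cscale | apply: Cadd => //; apply: Cscale].
Qed.

Lemma bE_add a1 a2 c1 c2 d1 d2 :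
  bE a1 a2 (addE c1 d1) (addE c2 d2) = bE a1 a2 c1 c2 (+) bE a1 a2 d1 d2.
Proof. by case: a1; case: a2; case: c1; case: c2; case: d1; case: d2. Qed.

Lemma beta_addr n (z w w' : word n) : beta z (addw w w') = beta z w (+) beta z w'.
Proof. rewrite /beta -big_split /=; apply: eq_bigr => i _; by rewrite !ffunE bE_add. Qed.

Lemma beta_sym n (z w : word n) : beta z w = beta w z.
Proof.
rewrite /beta; apply: eq_bigr => i _.
by case: (z.1 i); case: (z.2 i); case: (w.1 i); case: (w.2 i).
Qed.

Lemma beta0 n (z : word n) : beta z (word0 n) = false.
Proof.
rewrite /beta big1 // => i _; rewrite !ffunE; by case: (z.1 i); case: (z.2 i).
Qed.

Lemma addwK n (x w : word n) : addw (addw x w) w = x.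
Proof.
case: x => x1 x2; rewrite /addw /=; congr (_, _); apply/ffunP => i; rewrite !ffunE;
  by [case: (x1 i); case: (w.1 i) | case: (x2 i); case: (w.2 i)].
Qed.

Lemma half_card (T : finType) (A : {set T}) (t : T -> T) (f : T -> bool) :
  (forall x, t (t x) = x) -> (forall x, x \in A -> t x \in A) ->
  (forall x, f (t x) = ~~ f x) -> #|A| = 2 * #|[set x in A | ~~ f x]|.
Proof.
move=> tK tA ft.
have e : [set x in A | ~~ f x] = t @: [set x in A | f x].
  apply/setP => x; rewrite !inE; apply/andP/imsetP.
    case=> xA fx; exists (t x); last by rewrite tK.
    by rewrite inE tA // ft fx.
  case=> y; rewrite inE => /andP[yA fy] ->; by rewrite tA // ft fy.
have e2 : #|[set x in A | ~~ f x]| = #|[set x in A | f x]|.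
  by rewrite e card_imset //; exact: (can_inj tK).
rewrite -(cardID [set x | f x] A) mul2n -addnn; congr (_ + _).
  by rewrite e2; apply: eq_card => x; rewrite !inE andbC.
by apply: eq_card => x; rewrite !inE andbC.
Qed.

Definition sel (y : E) := match y with Ez => Ek | _ => Ez end.

Lemma nondeg n (w : word n) : w != word0 n -> exists z, beta z w.
Proof.
move=> wn0.
case: (pickP (fun i => w.1 i != E0)) => [i Hi | H1].
  exists ([ffun=> E0], [ffun j => if j == i then sel (w.1 i) else E0]).
  rewrite /beta (bigD1 i) //= big1 => [|j /negbTE ji]; rewrite !ffunE ?eqxx ?ji.
    by rewrite E0P in Hi; move: Hi; case: (w.1 i); case: (w.2 i).
  by case: (w.1 j); case: (w.2 j).
case: (pickP (fun i => w.2 i != E0)) => [i Hi | H2].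
  exists ([ffun j => if j == i then sel (w.2 i) else E0], [ffun=> E0]).
  rewrite /beta (bigD1 i) //= big1 => [|j /negbTE ji]; rewrite !ffunE ?eqxx ?ji.
    by rewrite E0P in Hi; move: Hi; case: (w.1 i); case: (w.2 i).
  by case: (w.1 j); case: (w.2 j).
case/eqP: wn0; case: w H1 H2 => w1 w2 /= H1 H2; rewrite /word0; congr pair;
  apply/ffunP => i; rewrite ffunE.
  by move: (H1 i) => /= /negbFE/eqP.
by move: (H2 i) => /= /negbFE/eqP.
Qed.

Lemma card_sumP (T : finType) (A : {pred T}) (P : pred T) :
  #|[set x in A | P x]| = \sum_(x in A) (P x : nat).
Proof.
rewrite -sum1_card [LHS]big_mkcond [RHS]big_mkcond /=.
by apply: eq_bigr => x _; rewrite !inE; case: (x \in A); case: (P x).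
Qed.

Lemma card_sumT (T : finType) (P : pred T) :
  #|[set x | P x]| = \sum_x (P x : nat).
Proof.
rewrite -sum1_card [LHS]big_mkcond /=.
by apply: eq_bigr => x _; rewrite !inE; case: (P x).
Qed.

Lemma count n (C : {set word n}) : word0 n \in C ->
  (forall x y, x \in C -> y \in C -> addw x y \in C) ->
  #|C| * #|[set z | [forall w in C, ~~ beta z w]]| = #|{: word n}|.
Proof.
move=> C0 Cadd.
set D := [set z | _]; set V := #|{: word n}|.
have wside : forall w, w \in C ->
    2 * #|[set z | ~~ beta z w]| = V + (if w == word0 n then V else 0).
  move=> w wC; case: eqP => [->|/eqP wn0].
    have -> : [set z | ~~ beta z (word0 n)] = setT by apply/setP=> z; rewrite !inE beta0.
    by rewrite cardsT mul2n addnn.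
  have [z0 bz0] := nondeg wn0.
  rewrite addn0 /V -cardsT (@half_card _ [set: word n] (fun x => addw x z0) (fun z => beta z w)).
  - congr (2 * _); apply: eq_card => z; by rewrite !inE.
  - by move=> x; rewrite addwK.
  - by move=> x; rewrite !inE.
  - by move=> x; rewrite beta_sym beta_addr [beta w z0]beta_sym bz0 addbT beta_sym.
have zside : forall z,
    2 * #|[set w in C | ~~ beta z w]| = #|C| + (if z \in D then #|C| else 0).
  move=> z; case: ifP => zD.
    have -> : [set w in C | ~~ beta z w] = C.
      apply/setP => w; rewrite inE; case wC: (w \in C) => //=.
      by move: zD; rewrite inE => /forall_inP; apply.
    by rewrite mul2n addnn.
  move: zD; rewrite inE => /negbT/forall_inPn [w0 w0C /negbNE bw0].
  rewrite addn0 (@half_card _ C (fun x => addw x w0) (beta z)) //.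
  - by move=> x; rewrite addwK.
  - by move=> x xC; apply: Cadd.
  - by move=> x; rewrite beta_addr bw0 addbT.
have E1 : \sum_(w in C) \sum_z (~~ beta z w : nat) = \sum_z \sum_(w in C) (~~ beta z w : nat).
  exact: exchange_big.
have E2 : 2 * (\sum_(w in C) \sum_z (~~ beta z w : nat)) = #|C| * V + V.
  rewrite big_distrr /=.
  rewrite (eq_bigr (fun w => V + (if w == word0 n then V else 0))); last first.
    by move=> w wC; rewrite -card_sumT wside.
  rewrite big_split /= sum_nat_const; congr (_ + _).
  by rewrite (bigD1 (word0 n)) //= eqxx big1 ?addn0 // => w /andP[_ /negbTE ->].
have E3 : 2 * (\sum_z \sum_(w in C) (~~ beta z w : nat)) = V * #|C| + #|D| * #|C|.
  rewrite big_distrr /=.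
  rewrite (eq_bigr (fun z => #|C| + (if z \in D then #|C| else 0))); last first.
    by move=> z _; rewrite -(@card_sumP _ C (fun w => ~~ beta z w)) zside.
  rewrite big_split /= sum_nat_const -big_mkcond /= sum_nat_const.
  by [].
move: E2 E3; rewrite E1 => ->; rewrite [V * _]mulnC [#|D| * _]mulnC => /addnI.
by move=> ->.
Qed.

Theorem mainTheorem13 (n : nat) (C : {set word n}) :
  E_linear C -> #|C| * #|symp_dual C| = #|{: E}| ^ (2 * n).
Proof.
move=> HC; rewrite (dual_eq HC); case: HC => C0 Cadd _; rewrite count //.
by rewrite card_prod !card_ffun card_ord -expnD addnn -mul2n.
Qed.
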